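(* Let $\alpha,\beta$ be propositional formulas, $V=V(\alpha)\cup V(\beta)$, and let $B_1,\dots,B_n$ enumerate $V(\beta)\setminus V(\alpha)$. If $\alpha\mathbin{|\!\sim}_{cw}\beta$, then there is a formula $\gamma$ with $V(\gamma)\subseteq V(\alpha)\cap V(\beta)$ such that $\alpha\mathbin{|\!\sim}_{cw}\gamma$ and $\gamma\land\neg B_1\land\dots\land\neg B_n\models\beta$ (in $\mathbf{HT}$). In particular $\gamma\mathbin{|\!\sim}_{cw}\beta$.
   Context: $V(\varphi)$ is the set of atoms of $\varphi$. Here-and-there logic $\mathbf{HT}(V)$ over atom set $V$: interpretations are pairs $\langle H,T\rangle$, $H\subseteq T\subseteq V$, viewed as two-world Kripke models ($h\le t$; atoms true at $h$: $H$, at $t$: $T$) with intuitionistic Kripke clauses, $\neg\varphi:=\varphi\to\bot$; $\mathcal M\models\varphi$ iff $\varphi$ true at both worlds; $\Pi\models\varphi$ (equivalently $\Pi\vdash\varphi$) iff every model of $\Pi$ is a model of $\varphi$. An equilibrium model of $\Pi$ over $V$ is a model $\langle T,T\rangle$ of $\Pi$ in $\mathbf{HT}(V)$ with no model $\langle H,T\rangle$ of $\Pi$ with $H\subsetneq T$; $E_V(\Pi)$ is the set of these. Closed-world equilibrium entailment: if $\Pi$ is non-empty and has equilibrium models, $\Pi\mathbin{|\!\sim}_{cw}\varphi$ iff $\mathcal M\models\varphi$ for every $\mathcal M\in E_{V(\Pi)\cup V(\varphi)}(\Pi)$; otherwise $\Pi\mathbin{|\!\sim}_{cw}\varphi$ iff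 $\Pi\vdash\varphi$ in $\mathbf{HT}$. A formula $\alpha$ is identified with $\{\alpha\}$. *)

(* Defs.v *)
From mathcomp Require Import all_boot.
Set Implicit Arguments. Unset Strict Implicit. Unset Printing Implicit Defensive.

Inductive form : Type :=
| Bot : form
| Atom : nat -> form
| And : form -> form -> form
| Or : form -> form -> form
| Imp : form -> form -> form.

Definition Neg (p : form) : form := Imp p Bot.

Fixpoint atoms (p : form) : seq nat :=
  match p with
  | Bot => [::]
  | Atom a => [:: a]
  | And p q | Or p q | Imp p q => atoms p ++ atoms q
  end.

(* Truth at world t of the HT model <H,T> (only T matters: classical) *)
Fixpoint sat_t (T : nat -> bool) (p : form) : Prop :=
  match p with
  | Bot => False
  | Atom a => T a
  | And p q => sat_t T p /\ sat_t T q
  | Or p q => sat_t T p \/ sat_t T q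
  | Imp p q => sat_t T p -> sat_t T q
  end.

(* Truth at world h (h <= t), intuitionistic Kripke clauses *)
Fixpoint sat_h (H T : nat -> bool) (p : form) : Prop :=
  match p with
  | Bot => False
  | Atom a => H a
  | And p q => sat_h H T p /\ sat_h H T q
  | Or p q => sat_h H T p \/ sat_h H T q
  | Imp p q => (sat_h H T p -> sat_h H T q) /\ (sat_t T p -> sat_t T q)
  end.

Definition ht_model (H T : nat -> bool) (p : form) : Prop :=
  sat_h H T p /\ sat_t T p.

Definition subpred (H T : nat -> bool) : Prop := forall x, H x -> T x.

Definition ht_interp (V : seq nat) (H T : nat -> bool) : Prop :=
  subpred H T /\ forall x, T x -> x \in V.

Definition ht_entails (a p : form) : Prop :=
  forall H T : nat -> bool, subpred H T -> ht_model H T a -> ht_model H T p.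

Definition eq_model (V : seq nat) (a : form) (T : nat -> bool) : Prop :=
  ht_interp V T T /\ ht_model T T a /\
  ~ (exists H : nat -> bool,
        ht_interp V H T /\ (exists x, T x /\ ~~ H x) /\ ht_model H T a).

(* Closed-world equilibrium entailment {a} |~cw p ({a} is non-empty) *)
Definition cw_entails (a p : form) : Prop :=
  let V := atoms a ++ atoms p in
  ((exists T, eq_model V a T) ->
     forall T, eq_model V a T -> ht_model T T p) /\
  (~ (exists T, eq_model V a T) -> ht_entails a p).

Definition new_atoms (a b : form) : seq nat :=
  undup [seq x <- atoms b | x \notin atoms a].

Definition and_negs (g : form) (Bs : seq nat) : form :=
  foldl (fun acc B => And acc (Neg (Atom B))) g Bs.

(* Main.v *)
Require Import Defs.
From mathcomp Require Import all_boot.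
From Stdlib Require Import Classical ClassicalEpsilon.
Set Implicit Arguments. Unset Strict Implicit. Unset Printing Implicit Defensive.

Definition Top := Imp Bot Bot.

Fixpoint conjm (I : eqType) (f : I -> form) (s : seq I) : form :=
  if s is i :: s' then And (f i) (conjm f s') else Top.
Fixpoint disjm (I : eqType) (f : I -> form) (s : seq I) : form :=
  if s is i :: s' then Or (f i) (disjm f s') else Bot.

Lemma conjm_h (I : eqType) (f : I -> form) s H T :
  sat_h H T (conjm f s) <-> (forall i, i \in s -> sat_h H T (f i)).
Proof.
elim: s => [|i s [IH1 IH2]] /=; first by split=> // _; split.
split.
  move=> [Hi Hs] j; rewrite inE => /orP [/eqP ->|]; first by [].
  by apply: IH1.
move=> Hj; split; first by apply: Hj; rewrite inE eqxx.
by apply: IH2 => j js; apply: Hj; rewrite inE js orbT.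
Qed.

Lemma conjm_t (I : eqType) (f : I -> form) s T :
  sat_t T (conjm f s) <-> (forall i, i \in s -> sat_t T (f i)).
Proof.
elim: s => [|i s [IH1 IH2]] /=; first by split=> // _ .
split.
  move=> [Hi Hs] j; rewrite inE => /orP [/eqP ->|]; first by [].
  by apply: IH1.
move=> Hj; split; first by apply: Hj; rewrite inE eqxx.
by apply: IH2 => j js; apply: Hj; rewrite inE js orbT.
Qed.

Lemma disjm_h (I : eqType) (f : I -> form) s H T :
  sat_h H T (disjm f s) <-> (exists i, i \in s /\ sat_h H T (f i)).
Proof.
elim: s => [|i s [IH1 IH2]] /=; first by split=> // [[i []]].
split.
  case=> [h|/IH1 [j [js hj]]]; first by exists i; rewrite inE eqxx.
  by exists j; rewrite inE js orbT.
move=> [j []]; rewrite inE => /orP [/eqP -> h|js hj]; first by left.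
by right; apply: IH2; exists j.
Qed.

Lemma disjm_t (I : eqType) (f : I -> form) s T :
  sat_t T (disjm f s) <-> (exists i, i \in s /\ sat_t T (f i)).
Proof.
elim: s => [|i s [IH1 IH2]] /=; first by split=> // [[i []]].
split.
  case=> [h|/IH1 [j [js hj]]]; first by exists i; rewrite inE eqxx.
  by exists j; rewrite inE js orbT.
move=> [j []]; rewrite inE => /orP [/eqP -> h|js hj]; first by left.
by right; apply: IH2; exists j.
Qed.

Lemma disjm_intro (I : eqType) (f : I -> form) s i H T :
  i \in s -> ht_model H T (f i) -> ht_model H T (disjm f s).
Proof.
move=> ins [h t]; split; [apply/disjm_h | apply/disjm_t]; by exists i.
Qed.

Lemma atoms_conjm (I : eqType) (f : I -> form) s (P : nat -> Prop) :
  (forall i, i \in s -> forall x, x \in atoms (f i) -> P x) ->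
  forall x, x \in atoms (conjm f s) -> P x.
Proof.
elim: s => [|i s IH] Hf x /=; first by rewrite in_nil.
rewrite mem_cat => /orP [h|h]; first by apply: (Hf i) => //; rewrite inE eqxx.
by apply: IH h => j js; apply: Hf; rewrite inE js orbT.
Qed.

Lemma atoms_disjm (I : eqType) (f : I -> form) s (P : nat -> Prop) :
  (forall i, i \in s -> forall x, x \in atoms (f i) -> P x) ->
  forall x, x \in atoms (disjm f s) -> P x.
Proof.
elim: s => [|i s IH] Hf x /=; first by rewrite in_nil.
rewrite mem_cat => /orP [h|h]; first by apply: (Hf i) => //; rewrite inE eqxx.
by apply: IH h => j js; apply: Hf; rewrite inE js orbT.
Qed.

Lemma agree p H T H' T' :
  (forall x, x \in atoms p -> H x = H' x) ->
  (forall x, x \in atoms p -> T x = T' x) ->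
  (sat_h H T p <-> sat_h H' T' p) /\ (sat_t T p <-> sat_t T' p).
Proof.
elim: p => [|a|p IHp q IHq|p IHp q IHq|p IHp q IHq] /= eH eT.
- tauto.
- by rewrite (eH a) ?(eT a) ?inE.
- have [h1 t1] := IHp (fun x hx => eH x ltac:(by rewrite mem_cat hx))
                      (fun x hx => eT x ltac:(by rewrite mem_cat hx)).
  have [h2 t2] := IHq (fun x hx => eH x ltac:(by rewrite mem_cat hx orbT))
                      (fun x hx => eT x ltac:(by rewrite mem_cat hx orbT)).
  tauto.
- have [h1 t1] := IHp (fun x hx => eH x ltac:(by rewrite mem_cat hx))
                      (fun x hx => eT x ltac:(by rewrite mem_cat hx)).
  have [h2 t2] := IHq (fun x hx => eH x ltac:(by rewrite mem_cat hx orbT))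
                      (fun x hx => eT x ltac:(by rewrite mem_cat hx orbT)).
  tauto.
- have [h1 t1] := IHp (fun x hx => eH x ltac:(by rewrite mem_cat hx))
                      (fun x hx => eT x ltac:(by rewrite mem_cat hx)).
  have [h2 t2] := IHq (fun x hx => eH x ltac:(by rewrite mem_cat hx orbT))
                      (fun x hx => eT x ltac:(by rewrite mem_cat hx orbT)).
  tauto.
Qed.

Lemma persist H T p : subpred H T -> sat_h H T p -> sat_t T p.
Proof.
move=> sub; elim: p => [|a|p IHp q IHq|p IHp q IHq|p IHp q IHq] //=.
- exact: sub.
- by case=> ??; split; auto.
- by case=> ?; [left|right]; auto.
- by case.
Qed.

Lemma sat_tt T p : sat_h T T p <-> sat_t T p.
Proof.
elim: p => [|a|p IHp q IHq|p IHp q IHq|p IHp q IHq] /=; tauto.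
Qed.

Lemma eq_support V a T : eq_model V a T -> forall x, T x -> x \in atoms a.
Proof.
move=> [[_ hV] [[mh mt] nomin]] x Tx.
case: (boolP (x \in atoms a)) => // nx; exfalso; apply: nomin.
exists (fun y => T y && (y != x)); split.
  by split; [move=> y /andP [] | exact: hV].
split; first by exists x; rewrite Tx eqxx.
split=> //.
apply: (proj1 (proj1 (@agree a T T (fun y => T y && (y != x)) T _ _))) mh => //.
move=> y hy; have ->: y != x by apply/eqP => e; by rewrite -e hy in nx.
by rewrite andbT.
Qed.

Lemma eq_transfer V V' a T : eq_model V a T ->
  (forall x, x \in atoms a -> x \in V) ->
  (forall x, x \in atoms a -> x \in V') -> eq_model V' a T.
Proof.
move=> E hV hV'; have sup := eq_support E.
case: E => [[sub _] [m nomin]]; split.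
  by split=> // x Tx; apply: hV'; exact: sup.
split=> // [[H [[sH _] rest]]]; apply: nomin; exists H; split=> //.
by split=> // x Tx; apply: hV; exact: sup.
Qed.

Definition cdec (P : Prop) : bool := if excluded_middle_informative P then true else false.
Lemma cdecP P : cdec P = true <-> P.
Proof. by rewrite /cdec; case: excluded_middle_informative => h; split. Qed.

Fixpoint powl (s : seq nat) : seq (seq nat) :=
  if s is x :: s' then powl s' ++ map (cons x) (powl s') else [:: [::]].
Lemma filter_powl (P : pred nat) s : filter P s \in powl s.
Proof.
elim: s => [|x s IH] /=; first by rewrite inE.
case: (P x); rewrite mem_cat ?IH //.
by rewrite (map_f (cons x) IH) orbT.
Qed.

Lemma and_negs_inv H T g Bs : ht_model H T (and_negs g Bs) ->
  ht_model H T g /\ forall B, B \in Bs -> ~ T B.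
Proof.
elim: Bs g => [|B Bs IH] g /= m; first by split.
have [[[hg hn] [tg tn]] rest] := IH _ m.
split=> // B'; rewrite inE => /orP [/eqP -> //|]; exact: rest.
Qed.

Lemma combine a b (C : seq nat) H T H1 T1 :
  (forall x, x \in atoms b -> x \in atoms a -> x \in C) ->
  subpred H T -> subpred H1 T1 -> ht_model H1 T1 a ->
  (forall x, x \in C -> H1 x = H x) -> (forall x, x \in C -> T1 x = T x) ->
  ht_entails a b -> ht_model H T b.
Proof.
move=> Cin sub sub1 [m1 m2] eH eT ent.
pose H2 := fun x => if x \in atoms a then H1 x else H x.
pose T2 := fun x => if x \in atoms a then T1 x else T x.
have s2 : subpred H2 T2.
  by move=> x; rewrite /H2 /T2; case: (x \in atoms a); [apply: sub1|apply: sub].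
have e1 : forall x, x \in atoms a -> H1 x = H2 x by move=> x hx; rewrite /H2 hx.
have e2 : forall x, x \in atoms a -> T1 x = T2 x by move=> x hx; rewrite /T2 hx.
have ag := @agree a H1 T1 H2 T2 e1 e2.
have [mb1 mb2] := ent H2 T2 s2 (conj (proj1 (proj1 ag) m1) (proj1 (proj2 ag) m2)).
have e3 : forall x, x \in atoms b -> H2 x = H x.
  by move=> x hx; rewrite /H2; case: ifP => // xa; exact: eH (Cin x hx xa).
have e4 : forall x, x \in atoms b -> T2 x = T x.
  by move=> x hx; rewrite /T2; case: ifP => // xa; exact: eT (Cin x hx xa).
have ag2 := @agree b H2 T2 H T e3 e4.
split; [exact: (proj1 (proj1 ag2) mb1) | exact: (proj1 (proj2 ag2) mb2)].
Qed.

Definition Lit2 (L0 L1 : seq nat) (x : nat) : form :=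
  if x \in L0 then Atom x else if x \in L1 then Neg (Neg (Atom x)) else Neg (Atom x).
Definition Mset (C : seq nat) (p : seq nat * seq nat) :=
  [seq x <- C | (x \in p.2) && (x \notin p.1)].
Definition chi (C : seq nat) (p : seq nat * seq nat) : form :=
  And (conjm (Lit2 p.1 p.2) C)
      (conjm (fun rs : nat * nat => Imp (Atom rs.1) (Atom rs.2))
             [seq (r, s) | r <- Mset C p, s <- Mset C p]).
Definition Spred (a : form) (C : seq nat) (p : seq nat * seq nat) : Prop :=
  exists H T, subpred H T /\ ht_model H T a /\
    (forall x, x \in C -> H x = (x \in p.1)) /\ (forall x, x \in C -> T x = (x \in p.2)).
Definition gN (a : form) (C : seq nat) : form :=
  disjm (chi C) [seq p <- [seq (L0, L1) | L0 <- powl C, L1 <- powl C] | cdec (Spred a C p)].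

Lemma atoms_gN a (C : seq nat) x : x \in atoms (gN a C) -> x \in C.
Proof.
move: x; apply: (@atoms_disjm _ _ _ (fun y => y \in C)) => p _ y.
rewrite /= mem_cat => /orP [].
  move: y; apply: (@atoms_conjm _ _ _ (fun y => y \in C)) => i iC z; rewrite /Lit2.
  by case: ifP => _; [|case: ifP => _]; rewrite /= inE => /eqP ->.
move: y; apply: (@atoms_conjm _ _ _ (fun y => y \in C)) => rs /allpairsP [[r s] [/= hr hs ->]] z.
rewrite /= !inE => /orP [] /eqP ->.
  by move: hr; rewrite mem_filter => /andP [].
by move: hs; rewrite mem_filter => /andP [].
Qed.

Lemma gN_complete a (C : seq nat) H T : subpred H T -> ht_model H T a -> ht_model H T (gN a C).
Proof.
move=> sub ma.
pose p := ([seq x <- C | H x], [seq x <- C | T x]).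
apply: (@disjm_intro _ _ _ p).
  rewrite mem_filter; apply/andP; split.
    apply/cdecP; exists H, T; split=> //; split=> //.
    by split=> x xC; rewrite /= mem_filter xC andbT.
  by apply: allpairs_f; apply: filter_powl.
split; split.
- apply/conjm_h => x xC; rewrite /Lit2 /= !mem_filter xC !andbT.
  case: (boolP (H x)) => hx //; case: (boolP (T x)) => tx /=.
    by split; [case=> _ /(_ tx) | move/(_ tx)].
  by split; apply/negP.
- apply/conjm_h => rs /allpairsP [[r s] [/= hr hs ->]] /=.
  move: hr hs; rewrite /Mset /= !mem_filter => /andP [/andP [_ nH] rC].
  move=> /andP [/andP [/andP [Ts _] _] _]; split=> // Hr.
  by rewrite Hr rC in nH.
- apply/conjm_t => x xC; rewrite /Lit2 /= !mem_filter xC !andbT.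
  case: (boolP (H x)) => hx; first exact: sub.
  case: (boolP (T x)) => tx /=; first by move/(_ tx).
  exact/negP.
- apply/conjm_t => rs /allpairsP [[r s] [/= hr hs ->]] /=.
  by move: hs; rewrite /Mset /= !mem_filter => /andP [/andP [/andP [-> _] _] _].
Qed.

Lemma gN_sound a b (C : seq nat) :
  (forall x, x \in atoms b -> x \in atoms a -> x \in C) ->
  ht_entails a b -> ht_entails (gN a C) b.
Proof.
move=> Cin ent H T sub [mh _].
have [p [pin hchi]] := proj1 (disjm_h _ _ _ _) mh.
rewrite mem_filter in pin; case/andP: pin => /cdecP [H1 [T1 [sub1 [m1 [eH eT]]]]] _.
have tchi := persist sub hchi.
case: p eH eT hchi tchi => [L0 L1] /= eH eT [h1 h2] [t1 t2].
have L01 : forall x, x \in C -> x \in L0 -> x \in L1.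
  by move=> x xC x0; rewrite -eT //; apply: sub1; rewrite eH.
have TC : forall x, x \in C -> T x = (x \in L1).
  move=> x xC; have := proj1 (conjm_h _ _ _ _) h1 x xC; rewrite /Lit2.
  case: ifP => x0.
    by move=> /= Hx; rewrite (L01 x xC x0); apply: sub.
  case: ifP => x1 /=.
    by move=> [_ nn]; case: (T x) nn => // nn; exfalso; apply: nn.
  by move=> [_ nt]; case: (T x) nt => // /(_ isT).
have HC0 : forall x, x \in C -> x \in L0 -> H x.
  move=> x xC x0; have := proj1 (conjm_h _ _ _ _) h1 x xC.
  by rewrite /Lit2 x0.
case: (classic (exists r, r \in Mset C (L0, L1) /\ H r)) => [[r [rM Hr]]|noM].
- apply: (@combine a b C H T T1 T1) => //.
  + by split; [apply/sat_tt|]; exact: persist sub1 (proj1 m1).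
  + move=> x xC; rewrite (eT x xC) -(TC x xC).
    case: (boolP (x \in L0)) => x0; first by rewrite (HC0 x xC x0) (sub x (HC0 x xC x0)).
    case: (boolP (x \in L1)) => x1.
      have xM : x \in Mset C (L0, L1) by rewrite /Mset mem_filter /= x1 x0 xC.
      have := proj1 (conjm_h _ _ _ _) h2 (r, x) (allpairs_f pair rM xM).
      by move=> [/(_ Hr) -> _]; rewrite (TC x xC) x1.
    rewrite (TC x xC) (negbTE x1).
    suff: ~~ H x by move/negbTE ->.
    by apply/negP => /sub; rewrite (TC x xC) (negbTE x1).
  + by move=> x xC; rewrite eT // TC.
- apply: (@combine a b C H T H1 T1) => //.
  + move=> x xC; rewrite eH //.
    case: (boolP (x \in L0)) => x0; first by rewrite (HC0 x xC x0).
    case: (boolP (H x)) => // Hx; exfalso.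
    have x1 : x \in L1 by rewrite -TC //; apply: sub.
    apply: noM; exists x; split=> //.
    by rewrite /Mset mem_filter /= x1 x0 xC.
  + by move=> x xC; rewrite eT // TC.
Qed.

Definition Lit (L : seq nat) (x : nat) : form :=
  if x \in L then Atom x else Neg (Atom x).
Definition K (C L : seq nat) : form := conjm (Lit L) C.
Definition Dpred (a b : form) (C L : seq nat) : Prop :=
  exists T0, eq_model (atoms a ++ atoms b) a T0 /\ forall x, x \in C -> T0 x = (x \in L).
Definition gE (a b : form) (C : seq nat) : form :=
  disjm (K C) [seq L <- powl C | cdec (Dpred a b C L)].

Lemma atoms_gE a b (C : seq nat) x : x \in atoms (gE a b C) -> x \in C.
Proof.
move: x; apply: (@atoms_disjm _ _ _ (fun y => y \in C)) => L _ y.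
move: y; apply: (@atoms_conjm _ _ _ (fun y => y \in C)) => i iC z; rewrite /Lit.
by case: ifP => _; rewrite /= inE => /eqP ->.
Qed.

Lemma K_intro (C L : seq nat) H T :
  (forall x, x \in C -> H x = (x \in L) /\ T x = (x \in L)) -> ht_model H T (K C L).
Proof.
move=> h; split; [apply/conjm_h | apply/conjm_t] => x xC; rewrite /Lit;
  have [h1 h2] := h x xC; case: (x \in L) h1 h2 => /= h1 h2; rewrite ?h1 ?h2 //; by split.
Qed.

Lemma K_inv (C L : seq nat) H T : subpred H T -> sat_h H T (K C L) ->
  forall x, x \in C -> H x = (x \in L) /\ T x = (x \in L).
Proof.
move=> sub hk x xC; have := proj1 (conjm_h _ _ _ _) hk x xC; rewrite /Lit.
case: (x \in L) => /=; first by move=> hx; rewrite hx (sub x hx).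
move=> [nh nt]; split; apply/negbTE/negP; assumption.
Qed.

Lemma gE_inv a b (C : seq nat) H T : subpred H T -> sat_h H T (gE a b C) ->
  exists T0, eq_model (atoms a ++ atoms b) a T0 /\
    forall x, x \in C -> H x = T0 x /\ T x = T0 x.
Proof.
move=> sub mh.
have [L [Lin hk]] := proj1 (disjm_h _ _ _ _) mh.
rewrite mem_filter in Lin; case/andP: Lin => /cdecP [T0 [E0 e0]] _.
exists T0; split=> // x xC; rewrite e0 //; exact: K_inv hk x xC.
Qed.

Theorem proposition4 (a b : form) :
  cw_entails a b ->
  exists g : form,
    (forall x, x \in atoms g -> (x \in atoms a) && (x \in atoms b)) /\
    cw_entails a g /\
    ht_entails (and_negs g (new_atoms a b)) b /\
    cw_entails g b.
Proof.
move=> [hE hN].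
pose C := [seq x <- atoms b | x \in atoms a].
have hC : forall x, x \in C -> (x \in atoms a) && (x \in atoms b).
  by move=> x; rewrite mem_filter andbC.
have Cin : forall x, x \in atoms b -> x \in atoms a -> x \in C.
  by move=> x xb xa; rewrite mem_filter xa xb.
have inl : forall (V : seq nat) x, x \in atoms a -> x \in atoms a ++ V.
  by move=> V x hx; rewrite mem_cat hx.
have refl : forall T : nat -> bool, subpred T T by move=> T x.
case: (classic (exists T, eq_model (atoms a ++ atoms b) a T)) => [E|nE].
-
  have hEb := hE E.
  have hat : forall x, x \in atoms (gE a b C) -> x \in C := @atoms_gE a b C.
  exists (gE a b C); split; first by move=> x /hat /hC.
  split; [split|split; [|split]].
  + move=> _ T ET.
    have E1 : eq_model (atoms a ++ atoms b) a T by apply: (eq_transfer ET) => x; apply: inl.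
    apply: (@disjm_intro _ _ _ [seq x <- C | T x]).
      rewrite mem_filter filter_powl andbT; apply/cdecP.
      by exists T; split=> // x xC; rewrite mem_filter xC andbT.
    by apply: K_intro => x xC; rewrite mem_filter xC andbT.
  + move=> nE'; exfalso; apply: nE'; case: E => T0 E0; exists T0.
    by apply: (eq_transfer E0) => x; apply: inl.
  + move=> H T sub m; have [[mg _] nB] := and_negs_inv m.
    have [T0 [E0 agr]] := gE_inv sub mg.
    have [mb1 mb2] := hEb T0 E0.
    have sup := eq_support E0.
    have out : forall x, x \in atoms b -> x \notin atoms a ->
        T x = false /\ H x = false /\ T0 x = false.
      move=> x xb xa.
      have xB : x \in new_atoms a b by rewrite /new_atoms mem_undup mem_filter xa xb.
      have Tx : T x = false by apply/negbTE/negP; apply: nB.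
      split=> //; split; first by apply/negbTE/negP => /sub; rewrite Tx.
      by apply/negbTE/negP => /sup; apply/negP.
    have e1 : forall x, x \in atoms b -> T0 x = H x.
      move=> x xb; case: (boolP (x \in atoms a)) => xa.
        by rewrite (proj1 (agr x (Cin x xb xa))).
      by have [_ [-> ->]] := out x xb xa.
    have e2 : forall x, x \in atoms b -> T0 x = T x.
      move=> x xb; case: (boolP (x \in atoms a)) => xa.
        by rewrite (proj2 (agr x (Cin x xb xa))).
      by have [-> [_ ->]] := out x xb xa.
    have [ag1 ag2] := agree e1 e2.
    by split; [apply/ag1 | apply/ag2].
  + move=> _ T ET.
    have [_ [[mg _] _]] := ET.
    have [T0 [E0 agr]] := gE_inv (refl T) mg.
    have [mb1 mb2] := hEb T0 E0.
    have sup := eq_support E0; have supT := eq_support ET.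
    have e : forall x, x \in atoms b -> T0 x = T x.
      move=> x xb; case: (boolP (x \in atoms a)) => xa.
        by rewrite (proj2 (agr x (Cin x xb xa))).
      case: (boolP (T0 x)) => [/sup|_]; first by rewrite (negbTE xa).
      case: (boolP (T x)) => // /supT /hat /hC; by rewrite (negbTE xa).
    have [ag1 ag2] := agree e e.
    by split; [apply/ag1 | apply/ag2].
  + move=> nG; exfalso; apply: nG.
    case: E => T0 E0.
    exists (fun x => (x \in C) && T0 x); split.
      split=> // x /andP [xC _].
      by rewrite mem_cat; have := hC x xC => /andP [_ ->]; rewrite orbT.
    split.
      apply: (@disjm_intro _ _ _ [seq x <- C | T0 x]).
        rewrite mem_filter filter_powl andbT; apply/cdecP.
        by exists T0; split=> // x xC; rewrite mem_filter xC andbT.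
      by apply: K_intro => x xC; rewrite xC mem_filter xC andbT.
    move=> [H [[sH _] [[x [Tx nHx]] [mH _]]]].
    have [T1 [E1 agr]] := gE_inv sH mH.
    case/andP: (Tx) => xC _.
    have [h1 h2] := agr x xC.
    by move: nHx; rewrite h1 -h2 Tx.
-
  have ent := hN nE.
  have gb := gN_sound Cin ent.
  exists (gN a C); split; first by move=> x /atoms_gN /hC.
  split; [split|split; [|split]].
  + move=> [T ET]; exfalso; apply: nE; exists T.
    by apply: (eq_transfer ET) => x; apply: inl.
  + by move=> _ H T sub m; apply: gN_complete.
  + by move=> H T sub m; apply: gb => //; have [] := and_negs_inv m.
  + by move=> _ T [_ [m _]]; apply: gb.
  + by move=> _.
Qed.
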